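(* There exists a constant $C\ge1$ depending only on $\mathbf A$ such that for every $B\in\mathbf B_{\mathrm o}$ and every $A\in\mathbf S$ there exist $c>0$, $t\in\mathbb R$ and $M\in\mathbf B_{\mathrm o}$ whose rows span $A^*V_B$ such that $\varphi_{BA}(x)=c\,\varphi_M(x)+t$ for all $x\in\mathbb R^2_{>0}$, and $$C^{-1}\frac{\|A^*u_{A,B}\|}{\|A^*r_{B,2}\|}\le c\le C\frac{\|A^*u_{A,B}\|}{\|A^*r_{B,2}\|}.$$
   Context: $\mathbf A\subset\mathrm{SL}(3,\mathbb R)_{>0}$ is finite (determinant one, positive entries) and $\mathbf S$ is the semigroup it generates. For $M\in\mathrm{Mat}_{2,3}(\mathbb R)$ with rows $r_{M,1},r_{M,2}$ and $x\in\mathbb R^2$, $\tilde x=(x_1,x_2,1)$ and $\varphi_M(x)=\langle r_{M,1},\tilde x\rangle/\langle r_{M,2},\tilde x\rangle$. $\mathbf B_{\mathrm o}$ is the set of $2\times3$ real matrices with orthonormal rows whose second row has nonnegative coordinates; $V_B$ is the row span of $B$. $A^*$ is the transpose. $u_{A,B}$ is the unique (up to sign) unit vector in $V_B$ with $A^*u_{A,B}\perp A^*r_{B,2}$. *)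

(* Defs.v *)
From HB Require Import structures.
From mathcomp Require Import all_boot all_order all_algebra.
From mathcomp Require Import reals.
Set Implicit Arguments. Unset Strict Implicit. Unset Printing Implicit Defensive.
Import Order.TTheory GRing.Theory Num.Theory.
Local Open Scope ring_scope.

Section Defs.
Variable R : realType.

Definition dot3 (u v : 'rV[R]_3) : R := \sum_(j < 3) u 0 j * v 0 j.
Definition norm3 (u : 'rV[R]_3) : R := Num.sqrt (dot3 u u).

Definition posSL3 (A : 'M[R]_3) : Prop :=
  \det A = 1 /\ forall i j, 0 < A i j.

Inductive semigroup_gen (As : seq 'M[R]_3) : 'M[R]_3 -> Prop :=
  | sg_base A : A \in As -> semigroup_gen As A
  | sg_mul A A' : semigroup_gen As A -> semigroup_gen As A' ->
                  semigroup_gen As (A *m A').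

Definition r1 (M : 'M[R]_(2,3)) : 'rV[R]_3 := row ord0 M.
Definition r2 (M : 'M[R]_(2,3)) : 'rV[R]_3 := row ord_max M.

Definition in_Bo (B : 'M[R]_(2,3)) : Prop :=
  B *m B^T = 1%:M /\ forall j, 0 <= r2 B 0 j.

Definition xtilde (x : 'rV[R]_2) : 'rV[R]_3 :=
  \row_(j < 3) [:: x 0 0; x 0 ord_max; 1]`_j.

Definition phi (M : 'M[R]_(2,3)) (x : 'rV[R]_2) : R :=
  dot3 (r1 M) (xtilde x) / dot3 (r2 M) (xtilde x).

End Defs.

(* Main.v *)
Require Import Defs.
From HB Require Import structures.
From mathcomp Require Import all_boot all_order all_algebra.
From mathcomp Require Import reals.
From mathcomp Require Import ring lra.
Import Order.TTheory GRing.Theory Num.Theory.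
Local Open Scope ring_scope.

Lemma sum3 {R : realType} (F : 'I_3 -> R) : \sum_(j < 3) F j = F 0 + F 1 + F 2%:R.
Proof. rewrite !big_ord_recr big_ord0 /= add0r. by congr (_ + _ + _); congr F; apply: val_inj. Qed.
Lemma sum2 {R : realType} (F : 'I_2 -> R) : \sum_(j < 2) F j = F 0 + F 1.
Proof. rewrite !big_ord_recr big_ord0 /= add0r. by congr (_ + _); congr F; apply: val_inj. Qed.

Lemma dot3E {R : realType} (u v : 'rV[R]_3) :
  dot3 u v = u 0 0 * v 0 0 + u 0 1 * v 0 1 + u 0 2%:R * v 0 2%:R.
Proof. by rewrite /dot3 sum3. Qed.

Lemma dot3C {R : realType} (u v : 'rV[R]_3) : dot3 u v = dot3 v u.
Proof. rewrite !dot3E; ring. Qed.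

Lemma dot3DZl {R : realType} (a b : R) (x y z : 'rV[R]_3) :
  dot3 (a *: x + b *: y) z = a * dot3 x z + b * dot3 y z.
Proof. rewrite !dot3E !mxE; ring. Qed.

Lemma dot3Zl {R : realType} (a : R) (x z : 'rV[R]_3) :
  dot3 (a *: x) z = a * dot3 x z.
Proof. rewrite !dot3E !mxE; ring. Qed.

Lemma dot3Zr {R : realType} (a : R) (x z : 'rV[R]_3) :
  dot3 z (a *: x) = a * dot3 z x.
Proof. rewrite !dot3E !mxE; ring. Qed.

Lemma dot3Bl {R : realType} (x y z : 'rV[R]_3) :
  dot3 (x - y) z = dot3 x z - dot3 y z.
Proof. rewrite !dot3E !mxE; ring. Qed.

Lemma dot3_ge0 {R : realType} (u : 'rV[R]_3) : 0 <= dot3 u u.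
Proof. rewrite dot3E; nra. Qed.

Lemma ord3_cases (j : 'I_3) : j = 0 \/ j = 1 \/ j = 2%:R.
Proof.
case: j => [[|[|[|k]]] Hk].
- by left; apply: val_inj.
- by right; left; apply: val_inj.
- by right; right; apply: val_inj.
- by [].
Qed.

Lemma ord2_cases (j : 'I_2) : j = ord0 \/ j = ord_max.
Proof.
case: j => [[|[|k]] Hk].
- by left; apply: val_inj.
- by right; apply: val_inj.
- by [].
Qed.

Lemma dot3_eq0 {R : realType} (u : 'rV[R]_3) : dot3 u u = 0 -> u = 0.
Proof.
rewrite dot3E => H.
have h0 : u 0 0 ^+ 2 = 0 by nra.
have h1 : u 0 1 ^+ 2 = 0 by nra.
have h2 : u 0 2%:R ^+ 2 = 0 by nra.
apply/rowP => j; rewrite mxE.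
have [->|[->|->]] := ord3_cases j; [move: h0|move: h1|move: h2];
  by move/eqP; rewrite expf_eq0 /= => /eqP.
Qed.

Lemma mmT_entry {R : realType} (M : 'M[R]_(2,3)) i j :
  (M *m M^T) i j = dot3 (row i M) (row j M).
Proof. rewrite !mxE /dot3; apply: eq_bigr => k _; by rewrite !mxE. Qed.

Lemma le_sum_term {R : realType} {I : finType} (F : I -> R) i :
  (forall j, 0 <= F j) -> F i <= \sum_j F j.
Proof. move=> H; rewrite (bigD1 i) //= lerDl; exact: sumr_ge0. Qed.

Lemma sg_prop {R : realType} {As : seq 'M[R]_3} {K : R}
  (HAs : forall A, A \in As -> posSL3 A)
  (HK : forall A, A \in As -> forall i j k, A i k <= K * A j k) A :
  semigroup_gen As A ->
  [/\ \det A = 1, (forall i j, 0 < A i j) & (forall i j k, A i k <= K * A j k)].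
Proof.
elim => [A0 HA0| A1 A2 _ [d1 p1 k1] _ [d2 p2 k2]].
  by have [? ?] := HAs A0 HA0; split => //; exact: HK.
split.
- by rewrite det_mulmx d1 d2 mulr1.
- move=> i j; rewrite mxE sum3.
  by apply: addr_gt0; [apply: addr_gt0|]; apply: mulr_gt0.
- move=> i j k; rewrite !mxE mulr_sumr; apply: ler_sum => l _.
  rewrite mulrA; apply: ler_wpM2r; [exact: ltW | exact: k1].
Qed.

Theorem lemma3p2 (R : realType) (As : seq 'M[R]_3)
  (HAs : forall A, A \in As -> posSL3 A) :
  exists C : R, 1 <= C /\
    forall (B : 'M[R]_(2,3)) (A : 'M[R]_3),
      in_Bo B -> semigroup_gen As A ->
      exists (c t : R) (M : 'M[R]_(2,3)),
        [/\ 0 < c, in_Bo M, (M == B *m A)%MS,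
         (forall x : 'rV[R]_2, (forall i, 0 < x 0 i) ->
            phi (B *m A) x = c * phi M x + t) &
         (forall u : 'rV[R]_3,
            (u <= B)%MS -> norm3 u = 1 ->
            dot3 (u *m A) (r2 B *m A) = 0 ->
            C^-1 * (norm3 (u *m A) / norm3 (r2 B *m A)) <= c /\
            c <= C * (norm3 (u *m A) / norm3 (r2 B *m A)))].
Proof.
pose K : R := 1 + \sum_(A <- As) \sum_i \sum_j \sum_k `|A i k / A j k|.
have K1 : 1 <= K.
  rewrite lerDl; apply: sumr_ge0 => A _; do 3!(apply: sumr_ge0 => ? _).
  exact: normr_ge0.
have HK : forall A, A \in As -> forall i j k, A i k <= K * A j k.
  move=> A HA i j k; have [_ Hpos] := HAs A HA.
  have : A i k / A j k <= K.
    apply: le_trans (ler_norm _) _.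
    rewrite /K (big_rem A) //=.
    have h3 : `|A i k / A j k| <= \sum_k0 `|A i k0 / A j k0|.
      by apply: (le_sum_term (fun k0 => `|A i k0 / A j k0|)) => ?; exact: normr_ge0.
    have h2 : \sum_k0 `|A i k0 / A j k0| <= \sum_j0 \sum_k0 `|A i k0 / A j0 k0|.
      apply: (le_sum_term (fun j0 => \sum_k0 `|A i k0 / A j0 k0|)) => ?.
      by apply: sumr_ge0 => ? _; exact: normr_ge0.
    have h1 : \sum_j0 \sum_k0 `|A i k0 / A j0 k0| <= \sum_i0 \sum_j0 \sum_k0 `|A i0 k0 / A j0 k0|.
      apply: (le_sum_term (fun i0 => \sum_j0 \sum_k0 `|A i0 k0 / A j0 k0|)) => ?.
      by do 2!(apply: sumr_ge0 => ? _); exact: normr_ge0.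
    apply: le_trans h3 _; apply: le_trans h2 _; apply: le_trans h1 _.
    rewrite addrCA lerDl; apply: addr_ge0 => //.
    apply: sumr_ge0 => A' _; do 3!(apply: sumr_ge0 => ? _); exact: normr_ge0.
  by rewrite ler_pdivrMr.
exists (1 + 3 * K); split; first lra.
move=> B A HB HA.
have [detA Apos AK] := sg_prop HAs HK A HA.
have [HBB HBpos] := HB.
pose b1 := r1 B; pose b2 := r2 B.
have o11 : dot3 b1 b1 = 1.
  by have := congr1 (fun M : 'M[R]_2 => M ord0 ord0) HBB; rewrite mmT_entry mxE.
have o12 : dot3 b1 b2 = 0.
  by have := congr1 (fun M : 'M[R]_2 => M ord0 ord_max) HBB; rewrite mmT_entry mxE.
have o22 : dot3 b2 b2 = 1.
  by have := congr1 (fun M : 'M[R]_2 => M ord_max ord_max) HBB; rewrite mmT_entry mxE.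
pose N := B *m A.
pose q := r1 N; pose p := r2 N.
have hq : q = b1 *m A by rewrite /q /r1 row_mul.
have hp : p = b2 *m A by rewrite /p /r2 row_mul.
have pE : forall k, p 0 k = b2 0 0 * A 0 k + b2 0 1 * A 1 k + b2 0 2%:R * A 2%:R k.
  by move=> k; rewrite hp mxE sum3.
have qE : forall k, q 0 k = b1 0 0 * A 0 k + b1 0 1 * A 1 k + b1 0 2%:R * A 2%:R k.
  by move=> k; rewrite hq mxE sum3.
have b2pos : forall j, 0 <= b2 0 j by [].
have b2sum : 1 <= b2 0 0 + b2 0 1 + b2 0 2%:R.
  move: o22; rewrite dot3E => o22'.
  have := b2pos 0; have := b2pos 1; have := b2pos 2%:R; nra.
have b1b : forall j, -1 <= b1 0 j <= 1.
  move: o11; rewrite dot3E => o11' j.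
  have [->|[->|->]] := ord3_cases j; apply/andP; split; nra.
have Apk : forall i k, A i k <= K * p 0 k.
  move=> i k; rewrite pE.
  have := AK i 0 k; have := AK i 1 k; have := AK i 2%:R k.
  have := b2pos 0; have := b2pos 1; have := b2pos 2%:R; have := Apos i k.
  nra.
have ppos : forall k, 0 < p 0 k.
  move=> k; have := Apk 0 k; have := Apos 0 k; nra.
have qb : forall k, - (3 * K * p 0 k) <= q 0 k <= 3 * K * p 0 k.
  move=> k; rewrite qE.
  have := Apk 0 k; have := Apk 1 k; have := Apk 2%:R k.
  have := Apos 0 k; have := Apos 1 k; have := Apos 2%:R k.
  have := b1b 0; have := b1b 1; have := b1b 2%:R.
  move=> /andP[? ?] /andP[? ?] /andP[? ?] *; apply/andP; split; nra.
pose P := dot3 p p.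
have Ppos : 0 < P.
  rewrite /P dot3E; have := ppos 0; have := ppos 1; have := ppos 2%:R; nra.
pose sg := dot3 q p / P.
have sgb : sg ^+ 2 <= 9 * K ^+ 2.
  have : - (3 * K * P) <= dot3 q p <= 3 * K * P.
    rewrite /P !dot3E.
    have := qb 0; have := qb 1; have := qb 2%:R.
    have := ppos 0; have := ppos 1; have := ppos 2%:R.
    move=> ? ? ? /andP[? ?] /andP[? ?] /andP[? ?]; apply/andP; split; nra.
  move=> /andP[h1 h2].
  have e : dot3 q p = sg * P by rewrite /sg mulfVK // gt_eqF.
  rewrite e in h1 h2.
  have : - (3 * K) <= sg <= 3 * K.
    by apply/andP; split; [rewrite -(ler_pM2r Ppos) mulNr | rewrite -(ler_pM2r Ppos)].
  move=> /andP[? ?]; nra.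
pose w := q - sg *: p.
have wp : dot3 w p = 0.
  by rewrite /w dot3Bl dot3Zl /sg mulfVK // ?subrr // gt_eqF.
pose ww := dot3 w w.
have wwpos : 0 < ww.
  rewrite lt_def dot3_ge0 andbT; apply/eqP => /dot3_eq0 w0.
  have Au : A \in unitmx by rewrite unitmxE detA unitr1.
  have hv : (b1 - sg *: b2) *m A = 0.
    by rewrite mulmxBl -scalemxAl -hq -hp.
  have v0 : b1 - sg *: b2 = 0.
    by rewrite -(mulmxK Au (b1 - sg *: b2)) hv mul0mx.
  have : dot3 (b1 - sg *: b2) b1 = 1.
    by rewrite dot3Bl dot3Zl o11 (dot3C b2) o12 mulr0 subr0.
  rewrite v0 /dot3 big1 ?mxE ?mul0r //.
    by move=> /esym /eqP; rewrite oner_eq0.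
  by move=> k _; rewrite mxE mul0r.
pose nw := Num.sqrt ww; pose np := Num.sqrt P.
have nwpos : 0 < nw by rewrite sqrtr_gt0.
have nppos : 0 < np by rewrite sqrtr_gt0.
have nw2 : nw ^+ 2 = ww by rewrite sqr_sqrtr // ltW.
have np2 : np ^+ 2 = P by rewrite sqr_sqrtr // ltW.
pose T : 'M[R]_2 := \matrix_(i < 2, j < 2)
  (if i == ord0 then (if j == ord0 then nw^-1 else - (sg / nw))
   else (if j == ord0 then 0 else np^-1)).
pose M := T *m N.
have rowM1 : r1 M = nw^-1 *: w.
  apply/rowP => k; rewrite !mxE sum2 !mxE /=.
  have -> : (1 : 'I_2) = ord_max by apply: val_inj.
  have -> : (0 : 'I_2) = ord0 by apply: val_inj.
  field; exact: lt0r_neq0.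
have rowM2 : r2 M = np^-1 *: p.
  apply/rowP => k; rewrite !mxE sum2 !mxE /=.
  have -> : (1 : 'I_2) = ord_max by apply: val_inj.
  by rewrite mul0r add0r.
have pp : forall k, 0 <= p 0 k by move=> k; exact: ltW.
exists (nw / np), sg, M; split.
- exact: divr_gt0.
- split; last first.
    by move=> j; rewrite rowM2 mxE; apply: mulr_ge0 => //; rewrite invr_ge0 ltW.
  apply/matrixP => i j; rewrite mmT_entry mxE.
  have [->|->] := ord2_cases i; have [->|->] := ord2_cases j;
    rewrite -/(r1 M) -/(r2 M) ?rowM1 ?rowM2 dot3Zl dot3Zr /=.
  + by rewrite -/ww -nw2; field; exact: lt0r_neq0.
  + by rewrite wp !mulr0.
  + by rewrite dot3C wp !mulr0.
  + by rewrite -/P -np2; field; exact: lt0r_neq0.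
- apply/eqmxP; apply: eqmxMfull.
  rewrite row_full_unit unitmxE -det_tr det_trig.
    rewrite big_ord_recr big_ord_recr big_ord0 /= mul1r !mxE /=.
    by rewrite unitfE mulf_neq0 // invr_neq0 // lt0r_neq0.
  apply/is_trig_mxP => i j; rewrite !mxE.
  have [->|->] := ord2_cases i; have [->|->] := ord2_cases j => //.
- move=> x Hx; rewrite /phi -/N -/q -/p rowM1 rowM2 !dot3Zl /w dot3Bl dot3Zl.
  have dpos : 0 < dot3 p (xtilde x).
    rewrite dot3E.
    have -> : xtilde x 0 0 = x 0 0 by rewrite mxE.
    have -> : xtilde x 0 1 = x 0 ord_max by rewrite mxE.
    have -> : xtilde x 0 2%:R = 1 by rewrite mxE.
    have := Hx 0; have := Hx ord_max; have := ppos 0; have := ppos 1; have := ppos 2%:R.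
    nra.
  by field; rewrite (lt0r_neq0 nppos) (lt0r_neq0 dpos) (lt0r_neq0 nwpos).
move=> u /submxP [D ->] nu ort.
have hDN : forall (X : 'M[R]_(2,3)), D *m X = D 0 0 *: r1 X + D 0 1 *: r2 X.
  move=> X; rewrite mulmx_sum_row !big_ord_recr big_ord0 /= add0r /r1 /r2.
  have -> : widen_ord (m:=2) (leqnSn 1) ord_max = ord0 by apply: val_inj.
  by have -> : (1 : 'I_2) = ord_max by apply: val_inj.
rewrite -mulmxA -/N -/p hDN -/q in ort *.
rewrite -/b2 -hp in ort *.
rewrite hDN in nu.
set a := D 0 0 in nu ort *; set d := D 0 1 in nu ort *.
have uu : a ^+ 2 + d ^+ 2 = 1.
  have : dot3 (a *: b1 + d *: b2) (a *: b1 + d *: b2) = 1.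
    have h0 : 0 <= dot3 (a *: b1 + d *: b2) (a *: b1 + d *: b2) by exact: dot3_ge0.
    by rewrite -(sqr_sqrtr h0); move: nu; rewrite /norm3 => ->; rewrite expr1n.
  rewrite dot3DZl !(dot3C _ (a *: b1 + d *: b2)) !dot3DZl o11 o22 (dot3C b2) o12.
  move=> <-; ring.
move: ort; rewrite dot3DZl -/P => ort.
have ed : d = - (a * sg).
  have e : dot3 q p = sg * P by rewrite /sg mulfVK // lt0r_neq0.
  have : (d + a * sg) * P = 0 by rewrite -ort e; ring.
  by move/eqP; rewrite mulf_eq0 (negbTE (lt0r_neq0 Ppos)) orbF addr_eq0 => /eqP.
have ew : a *: q + d *: p = a *: w.
  by rewrite ed /w scalerBr scalerA scaleNr mulrC.
have nuw : norm3 (a *: w) = `|a| * nw.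
  rewrite /norm3 dot3Zl dot3Zr mulrA -expr2 sqrtrM ?sqr_ge0 //.
  by rewrite sqrtr_sqr.
rewrite ew nuw -/np.
have a2 : a ^+ 2 * (1 + sg ^+ 2) = a ^+ 2 + d ^+ 2 by rewrite ed; ring.
rewrite uu in a2.
have na : `|a| ^+ 2 = a ^+ 2 by rewrite real_normK // num_real.
have na0 : 0 <= `|a| by exact: normr_ge0.
have hle1 : `|a| <= 1 by nra.
have hge : 1 <= (1 + 3 * K) * `|a|.
  have h1 : 1 + sg ^+ 2 <= (1 + 3 * K) ^+ 2 by nra.
  have h2 : 1 <= ((1 + 3 * K) * `|a|) ^+ 2.
    have a20 : 0 <= a ^+ 2 by rewrite -na; apply: exprn_ge0.
    rewrite exprMn na; apply: le_trans (ler_wpM2r a20 h1).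
    by rewrite mulrC a2.
  have h3 : 0 <= (1 + 3 * K) * `|a| by apply: mulr_ge0 => //; lra.
  nra.
set c := nw / np.
have cpos : 0 < c by exact: divr_gt0.
have -> : `|a| * nw / np = `|a| * c by rewrite /c mulrA.
split.
  rewrite ler_pdivrMl; last lra.
  nra.
nra.
Qed.
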